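(* The quasitriangular Hopf algebra $U_q(H_1,H_2,X^\pm)$ (with universal $R$-matrix $\mathcal R$ as in the context) is a ribbon Hopf algebra: the element $$\nu=e^{i\frac{\pi}{4}H_2^2}q^{-\frac14(H_1^2-H_2^2)}K_1K_2\left(1+(1-q^2)K_1^{-1}K_2^{-1}FE\right)$$ is central and invertible, with inverse $\nu^{-1}=e^{-i\frac{\pi}{4}H_2^2}q^{\frac14(H_1^2-H_2^2)}K_1^{-1}K_2^{-1}\left(1-(1-q^2)K_1K_2FE\right)$, and satisfies $\nu^2=u\,S(u)$, $\Delta\nu=(\mathcal R_{21}\mathcal R)^{-1}(\nu\otimes\nu)$, $\varepsilon(\nu)=1$, $S(\nu)=\nu$, where $u=\sum_iS(b_i)a_i$ for $\mathcal R=\sum_i a_i\otimes b_i$ and $\mathcal R_{21}=\sum_i b_i\otimes a_i$.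
   Context: $q$ is a deformation parameter and exponentials are understood formally. $K_1=q^{H_1/2}$, $K_2=e^{i\frac{\pi}{2}H_2}q^{H_2/2}$, $E=K_2X^+$, $F=K_2^{-1}X^-$. $U_q(H_1,H_2,X^\pm)$ is the Hopf algebra generated by $H_1,H_2,X^\pm$ with relations $[H_1,H_2]=0$, $[H_1,X^\pm]=\pm2X^\pm$, $[H_2,X^\pm]=\mp2X^\pm$, $[X^+,X^-]=\frac{K_1K_2-K_1^{-1}K_2^{-1}}{q-q^{-1}}$, $(X^\pm)^2=0$; coproduct $\Delta H_i=H_i\otimes1+1\otimes H_i$, $\Delta X^+=X^+\otimes K_1+K_2^{-1}\otimes X^+$, $\Delta X^-=X^-\otimes K_2+K_1^{-1}\otimes X^-$; counit $\varepsilon(H_i)=\varepsilon(X^\pm)=0$; antipode $S(H_i)=-H_i$, $S(X^+)=-qK_1^{-1}K_2X^+$, $S(X^-)=qK_1K_2^{-1}X^-$. Universal $R$-matrix $\mathcal{R}=e^{-i\frac{\pi}{4}H_2\otimes H_2}q^{\frac14(H_1\otimes H_1-H_2\otimes H_2)}(1\otimes1+(1-q^2)E\otimes F)$. A quasitriangular Hopf algebra is called ribbon if it has a central element $\nu$ with the four properties listed in the claim. *)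

(* Defs.v *)
(* Model of the (completed) Hopf algebra U_q(H1,H2,X^+-) used in the statement.
   "Exponentials understood formally" is read as: the Cartan part consists of
   (arbitrary) functions f(H1,H2) of the two commuting generators, evaluated on
   complex weights (H1,H2) in C^2, and q^x := exp(h x) with q = exp h.
   Since (X^+)^2 = (X^-)^2 = 0, every element of the algebra is uniquely
     x = sum_m x_m(H1,H2) . m,     m in {1, X^+, X^-, X^+X^-}
   (coefficients written on the LEFT), and an element of the (completed)
   tensor square is uniquely
     X = sum_{m,n} X_{m,n}(H1,H2,H1',H2') . (m (x) n)
   where H = H (x) 1 and H' = 1 (x) H. *)
From HB Require Import structures.
From mathcomp Require Import all_boot all_order all_algebra.
From mathcomp Require Import complex.
From mathcomp Require Import reals.
From mathcomp.analysis Require Import sequences exp trigo.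

Set Implicit Arguments.
Unset Strict Implicit.
Unset Printing Implicit Defensive.

Import Order.TTheory GRing.Theory Num.Theory.
Local Open Scope ring_scope.
Local Open Scope complex_scope.

Section UqModel.
Variable R : realType.
Local Notation C := R[i].

Definition cexp (z : C) : C :=
  (expR (complex.Re z))%:C * ((cos (complex.Im z))%:C + 'i * (sin (complex.Im z))%:C).

(** Weights: values of (H1, H2). *)
Definition wts := (C * C)%type.
Definition negw (H : wts) : wts := (- H.1, - H.2).
Definition addw (H H' : wts) : wts := (H.1 + H'.1, H.2 + H'.2).
Definition shift (H w : wts) : wts := (H.1 - w.1, H.2 - w.2).

(** PBW monomials 1, X^+, X^-, X^+ X^-. *)
Inductive mono := M1 | Mp | Mm | Mpm.
Definition monos : seq mono := [:: M1; Mp; Mm; Mpm].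

Definition dl (m p : mono) : C :=
  match m, p with
  | M1, M1 | Mp, Mp | Mm, Mm | Mpm, Mpm => 1
  | _, _ => 0
  end.

(** weight of a monomial: [H1, m] = (wt m).1 m, [H2, m] = (wt m).2 m *)
Definition wt (m : mono) : wts :=
  match m with
  | M1 => (0, 0) | Mp => (2, -2) | Mm => (-2, 2) | Mpm => (0, 0)
  end.
Definition alpha : wts := (2, -2).

Section Param.
Variable h : C.

Definition q : C := cexp h.
Definition qpow (x : C) : C := cexp (h * x).
Definition K1 (H : wts) : C := qpow (H.1 / 2).
Definition K2 (H : wts) : C := cexp ('i * (pi : R)%:C * H.2 / 2) * qpow (H.2 / 2).
(** [X^+, X^-] = (K1 K2 - K1^-1 K2^-1)/(q - q^-1) *)
Definition Cc (H : wts) : C :=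
  (K1 H * K2 H - (K1 H * K2 H)^-1) / (q - q^-1).

(** multiplication table: m * n = sum_p tab m n p (H) . p
    (uses (X^+-)^2 = 0 and X^- X^+ = X^+ X^- - Cc(H),
     and g(H) X^+ = X^+ g(H + alpha)) *)
Definition tab (m n p : mono) (H : wts) : C :=
  match m, n with
  | M1, _ => dl n p
  | _, M1 => dl m p
  | Mp, Mm => dl Mpm p
  | Mp, _ => 0
  | Mm, Mp => dl Mpm p - Cc H * dl M1 p
  | Mm, Mm => 0
  | Mm, Mpm => - Cc H * dl Mm p
  | Mpm, Mp => - Cc (shift H alpha) * dl Mp p
  | Mpm, Mm => 0
  | Mpm, Mpm => - Cc (shift H alpha) * dl Mpm p
  end.

(** The algebra U: x = sum_m (x m)(H) . m *)
Definition U := mono -> wts -> C.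

(* since m . g(H) = g(H - wt m) . m *)
Definition mulU (x y : U) : U := fun p H =>
  \sum_(m <- monos) \sum_(n <- monos) x m H * y n (shift H (wt m)) * tab m n p H.
Definition addU (x y : U) : U := fun p H => x p H + y p H.
Definition scaleU (c : C) (x : U) : U := fun p H => c * x p H.
Definition cartU (f : wts -> C) : U := fun p H => dl p M1 * f H.
Definition monoU (m : mono) : U := fun p _ => dl m p.
Definition oneU : U := monoU M1.

Definition U2 := mono -> mono -> wts -> wts -> C.

Definition mul2 (x y : U2) : U2 := fun p p' H H' =>
  \sum_(m <- monos) \sum_(n <- monos) \sum_(m' <- monos) \sum_(n' <- monos)
    x m m' H H' * y n n' (shift H (wt m)) (shift H' (wt m'))
      * tab m n p H * tab m' n' p' H'.
Definition add2 (x y : U2) : U2 := fun p p' H H' => x p p' H H' + y p p' H H'.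
Definition scale2 (c : C) (x : U2) : U2 := fun p p' H H' => c * x p p' H H'.
Definition tens (x y : U) : U2 := fun m n H H' => x m H * y n H'.
Definition cart2 (f : wts -> wts -> C) : U2 :=
  fun p p' H H' => dl p M1 * dl p' M1 * f H H'.
Definition one2 : U2 := tens oneU oneU.
Definition flip2 (x : U2) : U2 := fun m n H H' => x n m H' H.

Definition DeltaP : U2 :=
  add2 (tens (monoU Mp) (cartU K1)) (tens (cartU (fun H => (K2 H)^-1)) (monoU Mp)).
Definition DeltaM : U2 :=
  add2 (tens (monoU Mm) (cartU K2)) (tens (cartU (fun H => (K1 H)^-1)) (monoU Mm)).
Definition Delta_mono (m : mono) : U2 :=
  match m with
  | M1 => one2 | Mp => DeltaP | Mm => DeltaM | Mpm => mul2 DeltaP DeltaM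
  end.
(** Delta (f(H) m) = f(H (x) 1 + 1 (x) H) Delta(m)   (Delta H_i = H_i(x)1 + 1(x)H_i) *)
Definition Delta (x : U) : U2 := fun p p' H H' =>
  \sum_(m <- monos) mul2 (cart2 (fun H H' => x m (addw H H'))) (Delta_mono m) p p' H H'.

(** Counit: eps(f(H) m) = f(0) eps(m), eps(X^+-) = 0 *)
Definition eps (x : U) : C := x M1 (0, 0).

(** Antipode: S(f(H) m) = S(m) f(-H), S anti-multiplicative *)
Definition SP : U := mulU (cartU (fun H => - q * (K1 H)^-1 * K2 H)) (monoU Mp).
Definition SM : U := mulU (cartU (fun H => q * K1 H * (K2 H)^-1)) (monoU Mm).
Definition Smono (m : mono) : U :=
  match m with
  | M1 => oneU | Mp => SP | Mm => SM | Mpm => mulU SM SP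
  end.
Definition S (x : U) : U := fun p H =>
  \sum_(m <- monos) mulU (Smono m) (cartU (fun H => x m (negw H))) p H.

Definition Ee : U := mulU (cartU K2) (monoU Mp).
Definition Ff : U := mulU (cartU (fun H => (K2 H)^-1)) (monoU Mm).

Definition Rfact (H H' : wts) : C :=
  cexp (- ('i * (pi : R)%:C / 4) * (H.2 * H'.2)) * qpow ((H.1 * H'.1 - H.2 * H'.2) / 4).
Definition Rmat : U2 :=
  mul2 (cart2 Rfact) (add2 one2 (scale2 (1 - q ^+ 2) (tens Ee Ff))).
Definition R21 : U2 := flip2 Rmat.

(** The linear map a (x) b |-> S(b) a on the completed tensor square:
    for a coefficient g(H (x) 1, 1 (x) H) = sum g1(H) (x) g2(H) one gets
    S(g2(H) n) g1(H) m = S(n) g(H, -H) m. *)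
Definition SbaMap (G : U2) : U := fun p H =>
  \sum_(m <- monos) \sum_(n <- monos)
    mulU (mulU (S (monoU n)) (cartU (fun H => G m n H (negw H)))) (monoU m) p H.

Definition uDr : U := SbaMap Rmat.

Definition nu : U :=
  mulU (mulU (cartU (fun H => cexp ('i * (pi : R)%:C / 4 * H.2 ^+ 2)
                               * qpow (- (H.1 ^+ 2 - H.2 ^+ 2) / 4)))
             (cartU (fun H => K1 H * K2 H)))
       (addU oneU (scaleU (1 - q ^+ 2)
                    (mulU (cartU (fun H => (K1 H)^-1 * (K2 H)^-1)) (mulU Ff Ee)))).

Definition nuinv : U :=
  mulU (mulU (cartU (fun H => cexp (- ('i * (pi : R)%:C / 4) * H.2 ^+ 2)
                               * qpow ((H.1 ^+ 2 - H.2 ^+ 2) / 4)))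
             (cartU (fun H => (K1 H)^-1 * (K2 H)^-1)))
       (addU oneU (scaleU (- (1 - q ^+ 2))
                    (mulU (cartU (fun H => K1 H * K2 H)) (mulU Ff Ee)))).

End Param.
End UqModel.

(* Main.v *)
Require Import Defs.
From HB Require Import structures.
From mathcomp Require Import all_boot all_order all_algebra.
From mathcomp Require Import complex.
From mathcomp Require Import reals.
From mathcomp.analysis Require Import sequences exp trigo.
From mathcomp Require Import ring.
From Stdlib Require Import FunctionalExtensionality.
Import GRing.Theory Num.Theory.
Local Open Scope ring_scope.
Local Open Scope complex_scope.

Section Infra.
Variable R : realType.
Local Notation C := R[i].

Lemma cexpD (a b : C) : cexp (a + b) = cexp a * cexp b.
Proof.
case: a => a1 a2; case: b => b1 b2; rewrite /cexp /=.
rewrite expRD cosD sinD.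
apply/eqP; rewrite eq_complex /=; apply/andP; split; apply/eqP; ring.
Qed.

Lemma cexp0 : cexp (0 : C) = 1.
Proof.
rewrite /cexp /= expR0 cos0 sin0.
apply/eqP; rewrite eq_complex /=; apply/andP; split; apply/eqP; ring.
Qed.

Lemma cexp_ipi : cexp ('i * (pi : R)%:C) = -1.
Proof.
rewrite /cexp /=.
have -> : (0 * pi - 1 * 0 : R) = 0 by ring.
have -> : (0 * 0 + 1 * pi : R) = pi by ring.
rewrite expR0 cospi sinpi.
apply/eqP; rewrite eq_complex /=; apply/andP; split; apply/eqP; ring.
Qed.

Lemma cexp_neq0 (a : C) : cexp a != 0.
Proof.
apply/negP => /eqP H0.
have := cexpD a (-a); rewrite subrr cexp0 H0 mul0r => /eqP.
by rewrite oner_eq0.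
Qed.

Lemma cexpN (a : C) : cexp (- a) = (cexp a)^-1.
Proof.
apply: (mulfI (cexp_neq0 a)); rewrite -cexpD subrr cexp0 mulfV //; exact: cexp_neq0.
Qed.

Opaque cexp.
Section Atoms.
Variable h : C.
Hypothesis hq : q h ^+ 2 != 1.
Arguments cexp : simpl never.
Arguments qpow : simpl never.

Definition gg (H : wts R) : C := cexp ('i * (pi : R)%:C / 4 * H.2 ^+ 2)
                               * qpow h (- (H.1 ^+ 2 - H.2 ^+ 2) / 4).

Lemma q_neq0 : q h != 0. Proof. exact: cexp_neq0. Qed.
Lemma K1_neq0 H : K1 h H != 0. Proof. exact: cexp_neq0. Qed.
Lemma K2_neq0 H : K2 h H != 0. Proof. by rewrite mulf_neq0 // cexp_neq0. Qed.
Lemma gg_neq0 H : gg H != 0. Proof. by rewrite mulf_neq0 // cexp_neq0. Qed.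
Lemma Rfact_neq0 H H' : Rfact h H H' != 0. Proof. by rewrite mulf_neq0 // cexp_neq0. Qed.

Lemma negE (y : C) : - y = cexp ('i * (pi:R)%:C) * y.
Proof. by rewrite cexp_ipi mulN1r. Qed.
Ltac ce := rewrite ?expr2 -!cexpD; congr cexp; by field.
Lemma negE' (y : C) : - y = cexp (- ('i * (pi:R)%:C)) * y.
Proof. by rewrite cexpN cexp_ipi invrN1 mulN1r. Qed.
Ltac ceN' := rewrite [in RHS]negE'; ce.
Ltac ceN := rewrite [in RHS]negE; ce.
Ltac un := rewrite /gg /Rfact /K1 /K2 /qpow /q /shift /negw /addw /=.


Lemma mulNr_rev (x y : C) : - (x * y) = - x * y. Proof. by rewrite mulNr. Qed.
Lemma kk_neq0 H : K1 h H * K2 h H != 0. Proof. by rewrite mulf_neq0 // ?K1_neq0 ?K2_neq0. Qed.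

Lemma K1p' H : K1 h (shift H (wt R Mp)) * q h = K1 h H.
Proof. un; ce. Qed.
Lemma K1p H : K1 h (shift H (wt R Mp)) = K1 h H / q h.
Proof. by rewrite -(K1p' H) mulfK // q_neq0. Qed.
Lemma K1m H : K1 h (shift H (wt R Mm)) = K1 h H * q h.
Proof. un; ce. Qed.
Lemma K2p H : K2 h (shift H (wt R Mp)) = - q h * K2 h H.
Proof. un; ceN. Qed.
Lemma K2m' H : K2 h (shift H (wt R Mm)) * q h = - K2 h H.
Proof. un; ceN'. Qed.
Lemma K2m H : K2 h (shift H (wt R Mm)) = - (K2 h H / q h).
Proof. by rewrite [RHS]mulNr_rev -(K2m' H) mulfK // q_neq0. Qed.
Lemma ggp H : gg (shift H (wt R Mp)) = - (gg H * (K1 h H * K2 h H) ^+ 2).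
Proof. un; ceN. Qed.
Lemma ggm' H : gg (shift H (wt R Mm)) * (K1 h H * K2 h H) ^+ 2 = - gg H.
Proof. un; ceN. Qed.
Lemma ggm H : gg (shift H (wt R Mm)) = - (gg H / (K1 h H * K2 h H) ^+ 2).
Proof. by rewrite [RHS]mulNr_rev -(ggm' H) mulfK // expf_neq0 // kk_neq0. Qed.
Lemma Rfp1' H H' : Rfact h (shift H (wt R Mp)) H' * (K1 h H' * K2 h H') = Rfact h H H'.
Proof. un. ce. Qed.
Lemma Rfp1 H H' : Rfact h (shift H (wt R Mp)) H' = Rfact h H H' / (K1 h H' * K2 h H').
Proof. by rewrite -(Rfp1' H H') mulfK // kk_neq0. Qed.
Lemma Rfm1 H H' : Rfact h (shift H (wt R Mm)) H' = Rfact h H H' * (K1 h H' * K2 h H').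
Proof. un. ce. Qed.
Lemma Rfp2' H H' : Rfact h H (shift H' (wt R Mp)) * (K1 h H * K2 h H) = Rfact h H H'.
Proof. un. ce. Qed.
Lemma Rfp2 H H' : Rfact h H (shift H' (wt R Mp)) = Rfact h H H' / (K1 h H * K2 h H).
Proof. by rewrite -(Rfp2' H H') mulfK // kk_neq0. Qed.
Lemma Rfm2 H H' : Rfact h H (shift H' (wt R Mm)) = Rfact h H H' * (K1 h H * K2 h H).
Proof. un. ce. Qed.
Lemma Rfsym H H' : Rfact h H' H = Rfact h H H'.
Proof. un. ce. Qed.
Lemma Rfneg H : Rfact h H (negw H) = gg H.
Proof. un. ce. Qed.
Lemma ggneg H : gg (negw H) = gg H.
Proof. un. ce. Qed.
Lemma K1neg' H : K1 h (negw H) * K1 h H = 1.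
Proof. un. rewrite -cexpD -[RHS]cexp0. congr cexp. by field. Qed.
Lemma K1neg H : K1 h (negw H) = (K1 h H)^-1.
Proof. by apply: (mulIf (K1_neq0 H)); rewrite K1neg' mulVf // K1_neq0. Qed.
Lemma K2neg' H : K2 h (negw H) * K2 h H = 1.
Proof. un. rewrite -!cexpD -[RHS]cexp0. congr cexp. by field. Qed.
Lemma K2neg H : K2 h (negw H) = (K2 h H)^-1.
Proof. by apply: (mulIf (K2_neq0 H)); rewrite K2neg' mulVf // K2_neq0. Qed.
Lemma K1add H H' : K1 h (addw H H') = K1 h H * K1 h H'.
Proof. un. ce. Qed.
Lemma K2add H H' : K2 h (addw H H') = K2 h H * K2 h H'.
Proof. un. ce. Qed.
Lemma ggadd' H H' : gg (addw H H') * Rfact h H H' ^+ 2 = gg H * gg H'.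
Proof. un. ce. Qed.
Lemma ggadd H H' : gg (addw H H') = gg H * gg H' / Rfact h H H' ^+ 2.
Proof. by rewrite -(ggadd' H H') mulfK // expf_neq0 // Rfact_neq0. Qed.
Lemma K1zero : K1 h (0, 0) = 1.
Proof. un. by rewrite -[RHS]cexp0; congr cexp; field. Qed.
Lemma K2zero : K2 h (0, 0) = 1.
Proof. un. rewrite -cexpD -[RHS]cexp0; congr cexp; by field. Qed.
Lemma ggzero : gg (0, 0) = 1.
Proof. un. rewrite -cexpD -[RHS]cexp0; congr cexp; by field. Qed.
Lemma gginv' H : cexp (- ('i * (pi : R)%:C / 4) * H.2 ^+ 2) * qpow h ((H.1 ^+ 2 - H.2 ^+ 2) / 4) * gg H = 1.
Proof. un. rewrite -!cexpD -[RHS]cexp0. congr cexp. by field. Qed.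
Lemma gginv H : cexp (- ('i * (pi : R)%:C / 4) * H.2 ^+ 2) * qpow h ((H.1 ^+ 2 - H.2 ^+ 2) / 4) = (gg H)^-1.
Proof. by apply: (mulIf (gg_neq0 H)); rewrite gginv' mulVf // gg_neq0. Qed.
Lemma shift1 H : shift H (wt R M1) = H.
Proof. by case: H => a b; rewrite /shift /= !subr0. Qed.
Lemma shiftpm H : shift H (wt R Mpm) = H.
Proof. by case: H => a b; rewrite /shift /= !subr0. Qed.
Lemma alphaE : alpha R = wt R Mp. Proof. by []. Qed.

Lemma sum_monos (F : mono -> C) : \sum_(m <- monos) F m = F M1 + F Mp + F Mm + F Mpm.
Proof. by rewrite /monos !big_cons big_nil addr0 !addrA. Qed.

Lemma mulU_cartl_pt f (y : U R) p H : mulU h (cartU f) y p H = f H * y p H.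
Proof.
rewrite /mulU !sum_monos /cartU; cbn [dl tab]; rewrite shift1.
case: p; cbn [dl]; ring.
Qed.

Lemma mulU_cartr_pt (x : U R) f p H : mulU h x (cartU f) p H = x p H * f (shift H (wt R p)).
Proof.
rewrite /mulU !sum_monos /cartU; cbn [dl tab].
case: p; cbn [dl]; ring.
Qed.

Lemma mulU_cc f1 f2 : mulU h (cartU f1) (cartU f2) = cartU (fun H => f1 H * f2 H).
Proof.
apply: functional_extensionality => p; apply: functional_extensionality => H.
rewrite mulU_cartl_pt /cartU; ring.
Qed.


Definition el2 (f : wts R -> wts R -> C) (a a' : mono) : U2 R :=
  fun p p' H H' => dl R p a * dl R p' a' * f H H'.
Definition elU (f : wts R -> C) (a : mono) : U R := fun p H => dl R p a * f H.

Lemma sum_collapse a (F : mono -> C) : (forall m, m <> a -> F m = 0) ->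
  \sum_(m <- monos) F m = F a.
Proof.
rewrite sum_monos; case: a => hF.
- by rewrite (hF Mp) // (hF Mm) // (hF Mpm) //; ring.
- by rewrite (hF M1) // (hF Mm) // (hF Mpm) //; ring.
- by rewrite (hF M1) // (hF Mp) // (hF Mpm) //; ring.
- by rewrite (hF M1) // (hF Mp) // (hF Mm) //; ring.
Qed.

Lemma dl_neq m a : m <> a -> dl R m a = 0.
Proof. by case: m; case: a. Qed.
Lemma dl_id a : dl R a a = 1.
Proof. by case: a. Qed.

Lemma mul2_el2 f g a a' b b' p p' H H' :
  mul2 h (el2 f a a') (el2 g b b') p p' H H' =
  f H H' * g (shift H (wt R a)) (shift H' (wt R a')) * tab h a b p H * tab h a' b' p' H'.
Proof.
rewrite /mul2 /el2.
rewrite (sum_collapse a); last first.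
  move=> m hm; rewrite (dl_neq _ _ hm).
  apply: big1 => n _; apply: big1 => m' _; apply: big1 => n' _; ring.
rewrite (sum_collapse b); last first.
  move=> m hm; rewrite (dl_neq _ _ hm).
  apply: big1 => n _; apply: big1 => m' _; ring.
rewrite (sum_collapse a'); last first.
  move=> m hm; rewrite (dl_neq _ _ hm).
  apply: big1 => n _; ring.
rewrite (sum_collapse b'); last first.
  move=> m hm; rewrite (dl_neq _ _ hm); ring.
rewrite !dl_id; ring.
Qed.

Lemma mulU_elU f g a b p H :
  mulU h (elU f a) (elU g b) p H = f H * g (shift H (wt R a)) * tab h a b p H.
Proof.
rewrite /mulU /elU.
rewrite (sum_collapse a); last first.
  move=> m hm; rewrite (dl_neq _ _ hm).
  apply: big1 => n _; ring.
rewrite (sum_collapse b); last first.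
  move=> m hm; rewrite (dl_neq _ _ hm); ring.
rewrite !dl_id; ring.
Qed.

Lemma mul2_addl x y z p p' H H' :
  mul2 h (add2 x y) z p p' H H' = mul2 h x z p p' H H' + mul2 h y z p p' H H'.
Proof.
rewrite /mul2 /add2 -big_split; apply: eq_bigr => m _.
rewrite -big_split; apply: eq_bigr => n _.
rewrite -big_split; apply: eq_bigr => m' _.
rewrite -big_split; apply: eq_bigr => n' _; rewrite /=; ring.
Qed.
Lemma mul2_addr x y z p p' H H' :
  mul2 h x (add2 y z) p p' H H' = mul2 h x y p p' H H' + mul2 h x z p p' H H'.
Proof.
rewrite /mul2 /add2 -big_split; apply: eq_bigr => m _.
rewrite -big_split; apply: eq_bigr => n _.
rewrite -big_split; apply: eq_bigr => m' _.
rewrite -big_split; apply: eq_bigr => n' _; rewrite /=; ring.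
Qed.
Lemma mulU_addl x y z p H :
  mulU h (addU x y) z p H = mulU h x z p H + mulU h y z p H.
Proof.
rewrite /mulU /addU -big_split; apply: eq_bigr => m _.
rewrite -big_split; apply: eq_bigr => n _; rewrite /=; ring.
Qed.
Lemma mulU_addr x y z p H :
  mulU h x (addU y z) p H = mulU h x y p H + mulU h x z p H.
Proof.
rewrite /mulU /addU -big_split; apply: eq_bigr => m _.
rewrite -big_split; apply: eq_bigr => n _; rewrite /=; ring.
Qed.


Lemma qq1 : q h * q h - 1 != 0.
Proof. by rewrite subr_eq0 -expr2. Qed.
Lemma qpow_neq0 x : qpow h x != 0. Proof. exact: cexp_neq0. Qed.
Ltac nz1 := match goal with
  | |- is_true (K1 _ _ != 0) => exact: K1_neq0
  | |- is_true (K2 _ _ != 0) => exact: K2_neq0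
  | |- is_true (gg _ != 0) => exact: gg_neq0
  | |- is_true (Rfact _ _ _ != 0) => exact: Rfact_neq0
  | |- is_true (q _ != 0) => exact: q_neq0
  | |- is_true (q _ * q _ - 1 != 0) => exact: qq1
  | |- is_true (cexp _ != 0) => exact: cexp_neq0
  | |- is_true (qpow _ _ != 0) => exact: qpow_neq0
  | |- is_true true => exact: isT
  end.
Ltac nz := repeat (apply/andP; split); nz1.
Ltac fld := field; nz.
Ltac fldg := fld.
Ltac atoms := rewrite ?alphaE ?shift1 ?shiftpm /Cc ?Rfneg ?K1neg ?K2neg ?ggneg ?K1add ?K2add ?ggadd ?Rfp1 ?Rfm1 ?Rfp2 ?Rfm2 ?ggp ?ggm
  ?K1p ?K1m ?K2p ?K2m.

Local Notation c := (1 - q h ^+ 2).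
Local Notation kk H := (K1 h H * K2 h H).

Lemma Ee_pt p H : Ee h p H = K2 h H * dl R Mp p.
Proof. by rewrite /Ee mulU_cartl_pt. Qed.
Lemma Ff_pt p H : Ff h p H = (K2 h H)^-1 * dl R Mm p.
Proof. by rewrite /Ff mulU_cartl_pt. Qed.

Definition FEc (p : mono) (H : wts R) : C :=
  match p with M1 => Cc h H / q h | Mpm => - (q h)^-1 | _ => 0 end.

Lemma FE_pt p H : mulU h (Ff h) (Ee h) p H = FEc p H.
Proof.
rewrite /mulU !sum_monos !Ff_pt !Ee_pt; case: p; cbn [FEc tab dl]; atoms.
all: fld.
Qed.

Definition NU : U R := addU (elU (fun H => gg H * kk H + gg H * c * Cc h H / q h) M1)
                            (elU (fun H => - (gg H * c / q h)) Mpm).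

Lemma nu_pt p H : nu h p H = NU p H.
Proof.
rewrite /nu mulU_cc mulU_cartl_pt /addU /scaleU mulU_cartl_pt FE_pt.
rewrite /NU /addU /elU /oneU /monoU.
case: p; cbn [FEc dl]; rewrite /gg.
all: fldg.
Qed.

Definition NUI : U R := addU (elU (fun H => (gg H * kk H)^-1 - c * Cc h H / (gg H * q h)) M1)
                             (elU (fun H => c / (q h * gg H)) Mpm).

Lemma nuinv_pt p H : nuinv h p H = NUI p H.
Proof.
rewrite /nuinv mulU_cc mulU_cartl_pt /addU /scaleU mulU_cartl_pt FE_pt gginv.
rewrite /NUI /addU /elU /oneU /monoU.
case: p; cbn [FEc dl].
all: fld.
Qed.

Lemma funU (x y : U R) : (forall p H, x p H = y p H) -> x = y.
Proof.
move=> e; apply: functional_extensionality => p; apply: functional_extensionality => H; exact: e.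
Qed.
Lemma funU2 (x y : U2 R) : (forall p p' H H', x p p' H H' = y p p' H H') -> x = y.
Proof.
move=> e; apply: functional_extensionality => p; apply: functional_extensionality => p'.
apply: functional_extensionality => H; apply: functional_extensionality => H'; exact: e.
Qed.

Lemma nuE : nu h = NU. Proof. apply: funU; exact: nu_pt. Qed.
Lemma nuinvE : nuinv h = NUI. Proof. apply: funU; exact: nuinv_pt. Qed.

Lemma nu_nuinv : mulU h (nu h) (nuinv h) = @oneU R.
Proof.
rewrite nuE nuinvE; apply: funU => p H.
rewrite /NU /NUI !mulU_addl !mulU_addr !mulU_elU /oneU /monoU.
case: p; cbn [tab dl]; atoms.
all: fld.
Qed.

Lemma nuinv_nu : mulU h (nuinv h) (nu h) = @oneU R.
Proof.
rewrite nuE nuinvE; apply: funU => p H.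
rewrite /NU /NUI !mulU_addl !mulU_addr !mulU_elU /oneU /monoU.
case: p; cbn [tab dl]; atoms.
all: fld.
Qed.

Lemma U_decomp (x : U R) : x = addU (addU (addU (elU (x M1) M1) (elU (x Mp) Mp))
                                  (elU (x Mm) Mm)) (elU (x Mpm) Mpm).
Proof. apply: funU => p H; rewrite /addU /elU; case: p; cbn [dl]; ring. Qed.

Lemma nu_central (x : U R) : mulU h (nu h) x = mulU h x (nu h).
Proof.
rewrite nuE (U_decomp x); apply: funU => p H.
rewrite /NU !mulU_addl !mulU_addr !mulU_elU.
case: p; cbn [tab dl]; atoms.
all: fld.
Qed.

Lemma cart2E f : cart2 f = el2 f M1 M1. Proof. by []. Qed.
Lemma cartUE f : cartU f = elU f M1. Proof. by []. Qed.
Lemma dlC a b : dl R a b = dl R b a. Proof. by case: a; case: b. Qed.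
Lemma one2E : @one2 R = el2 (fun _ _ => 1) M1 M1.
Proof. apply: funU2 => p p' H H'; rewrite /one2 /tens /oneU /monoU /el2 (dlC M1) (dlC M1); ring. Qed.
Lemma monoUE m : @monoU R m = elU (fun _ => 1) m.
Proof. apply: funU => p H; rewrite /monoU /elU dlC; ring. Qed.
Lemma tensEF : tens (Ee h) (Ff h) = el2 (fun H H' => K2 h H / K2 h H') Mp Mm.
Proof. apply: funU2 => p p' H H'; rewrite /tens Ee_pt Ff_pt /el2 (dlC Mp) (dlC Mm); ring. Qed.
Lemma scale2E (k : C) f a a' : scale2 k (el2 f a a') = el2 (fun H H' => k * f H H') a a'.
Proof. apply: funU2 => p p' H H'; rewrite /scale2 /el2; ring. Qed.

Definition RM : U2 R := add2 (el2 (Rfact h) M1 M1)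
   (el2 (fun H H' => c * Rfact h H H' * K2 h H / K2 h H') Mp Mm).

Lemma RmatE : Rmat h = RM.
Proof.
apply: funU2 => p p' H H'.
rewrite /Rmat cart2E one2E tensEF scale2E mul2_addr !mul2_el2 /RM /add2 /el2.
case: p; case: p'; cbn [tab dl]; atoms.
all: fld.
Qed.

Lemma flip2_el2 f a a' : flip2 (el2 f a a') = el2 (fun H H' => f H' H) a' a.
Proof. apply: funU2 => p p' H H'; rewrite /flip2 /el2; ring. Qed.
Lemma flip2_add (x y : U2 R) : flip2 (add2 x y) = add2 (flip2 x) (flip2 y).
Proof. by []. Qed.

Definition RRc : U2 R :=
  add2 (add2 (add2 (add2
    (el2 (fun H H' => Rfact h H H' ^+ 2) M1 M1)
    (el2 (fun H H' => c * Rfact h H H' ^+ 2 * K2 h H / K2 h H') Mp Mm))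
    (el2 (fun H H' => - (c * Rfact h H H' ^+ 2 * K2 h H' * kk H' / (K2 h H * kk H))) Mm Mp))
    (el2 (fun H H' => - (c ^+ 2 * Rfact h H H' ^+ 2 * kk H' / (kk H * q h ^+ 2))) Mpm Mpm))
    (el2 (fun H H' => c ^+ 2 * Rfact h H H' ^+ 2 * kk H' * Cc h H / (kk H * q h ^+ 2)) M1 Mpm).

Lemma RRE : mul2 h (R21 h) (Rmat h) = RRc.
Proof.
apply: funU2 => p p' H H'.
rewrite /R21 RmatE /RM flip2_add !flip2_el2 !mul2_addl !mul2_addr !mul2_el2 /RRc /add2 /el2.
case: p; case: p'; cbn [tab dl]; rewrite ?(Rfsym H H'); atoms.
all: fld.
Qed.

Definition Wc : U2 R :=
  add2 (add2 (add2 (add2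
    (el2 (fun H H' => (Rfact h H H' ^+ 2)^-1) M1 M1)
    (el2 (fun H H' => c * K2 h H' * kk H / (K2 h H * kk H' * Rfact h H H' ^+ 2)) Mm Mp))
    (el2 (fun H H' => - (c * K2 h H * kk H' ^+ 2 / (K2 h H' * kk H ^+ 2 * Rfact h H H' ^+ 2))) Mp Mm))
    (el2 (fun H H' => - (c ^+ 2 * kk H' / (q h ^+ 2 * kk H * Rfact h H H' ^+ 2))) Mpm Mpm))
    (el2 (fun H H' => c ^+ 2 * kk H' * Cc h H' / (q h ^+ 2 * kk H * Rfact h H H' ^+ 2)) Mpm M1).

Lemma W_RR : mul2 h Wc (mul2 h (R21 h) (Rmat h)) = @one2 R.
Proof.
rewrite RRE one2E; apply: funU2 => p p' H H'.
rewrite /Wc /RRc !mul2_addl !mul2_addr !mul2_el2 /el2.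
case: p; case: p'; cbn [tab dl]; atoms.
all: fld.
Qed.

Lemma RR_W : mul2 h (mul2 h (R21 h) (Rmat h)) Wc = @one2 R.
Proof.
rewrite RRE one2E; apply: funU2 => p p' H H'.
rewrite /Wc /RRc !mul2_addl !mul2_addr !mul2_el2 /el2.
case: p; case: p'; cbn [tab dl]; atoms.
all: fld.
Qed.

Lemma tens_el f g a b : tens (elU f a) (elU g b) = el2 (fun H H' => f H * g H') a b.
Proof. apply: funU2 => p p' H H'; rewrite /tens /elU /el2; ring. Qed.
Lemma tens_addl (x y z : U R) : tens (addU x y) z = add2 (tens x z) (tens y z).
Proof. apply: funU2 => p p' H H'; rewrite /tens /addU /add2; ring. Qed.
Lemma tens_addr (x y z : U R) : tens x (addU y z) = add2 (tens x y) (tens x z).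
Proof. apply: funU2 => p p' H H'; rewrite /tens /addU /add2; ring. Qed.

Lemma DPE : DeltaP h = add2 (el2 (fun H H' => K1 h H') Mp M1) (el2 (fun H H' => (K2 h H)^-1) M1 Mp).
Proof.
rewrite /DeltaP !monoUE !cartUE !tens_el; congr add2; congr el2;
apply: functional_extensionality => H; apply: functional_extensionality => H'; ring.
Qed.
Lemma DME : DeltaM h = add2 (el2 (fun H H' => K2 h H') Mm M1) (el2 (fun H H' => (K1 h H)^-1) M1 Mm).
Proof.
rewrite /DeltaM !monoUE !cartUE !tens_el; congr add2; congr el2;
apply: functional_extensionality => H; apply: functional_extensionality => H'; ring.
Qed.

Definition DPMc : U2 R :=
  add2 (add2 (add2
    (el2 (fun H H' => kk H') Mpm M1)
    (el2 (fun H H' => q h * K1 h H' / K1 h H) Mp Mm))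
    (el2 (fun H H' => - (q h * K2 h H' / K2 h H)) Mm Mp))
    (el2 (fun H H' => (kk H)^-1) M1 Mpm).

Lemma DPME : mul2 h (DeltaP h) (DeltaM h) = DPMc.
Proof.
apply: funU2 => p p' H H'.
rewrite DPE DME !mul2_addl !mul2_addr !mul2_el2 /DPMc /add2 /el2.
case: p; case: p'; cbn [tab dl]; atoms.
all: fld.
Qed.

Lemma Delta_nu : Delta h (nu h) = mul2 h Wc (tens (nu h) (nu h)).
Proof.
rewrite nuE; apply: funU2 => p p' H H'.
rewrite /Delta sum_monos; cbn [Delta_mono].
rewrite DPME DPE DME one2E !cart2E !mul2_addr !mul2_el2.
rewrite /NU tens_addl !tens_addr !tens_el.
rewrite /Wc !mul2_addl !mul2_addr !mul2_el2 /DPMc /add2 /el2 /elU /addU.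
case: p; case: p'; cbn [tab dl]; atoms.
all: fld.
Qed.

Lemma SPE : SP h = elU (fun H => - q h * (K1 h H)^-1 * K2 h H) Mp.
Proof.
apply: funU => p H; rewrite /SP cartUE monoUE mulU_elU ?shift1 /elU.
case: p; cbn [tab dl]; ring.
Qed.
Lemma SME : SM h = elU (fun H => q h * K1 h H * (K2 h H)^-1) Mm.
Proof.
apply: funU => p H; rewrite /SM cartUE monoUE mulU_elU ?shift1 /elU.
case: p; cbn [tab dl]; ring.
Qed.
Lemma SMSPE : mulU h (SM h) (SP h) = addU (elU (fun H => - Cc h H) M1) (elU (fun _ => 1) Mpm).
Proof.
apply: funU => p H; rewrite SME SPE mulU_elU /addU /elU.
case: p; cbn [tab dl]; atoms.
all: fld.
Qed.

Lemma S_pt (x : U R) p H :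
  S h x p H = \sum_(m <- monos) Smono h m p H * x m (negw (shift H (wt R p))).
Proof. rewrite /S; apply: eq_bigr => m _; by rewrite mulU_cartr_pt. Qed.

Lemma S_nu : S h (nu h) = nu h.
Proof.
apply: funU => p H; rewrite S_pt sum_monos /Smono SMSPE SPE SME /oneU monoUE nuE.
rewrite /NU /addU /elU.
case: p; cbn [tab dl]; atoms.
all: fld.
Qed.

Lemma eps_nu : eps (nu h) = 1.
Proof.
rewrite /eps nuE /NU /addU /elU; cbn [dl].
rewrite /Cc ggzero K1zero K2zero.
fld.
Qed.

Lemma SmonoU n : S h (monoU n) = Smono h n.
Proof.
apply: funU => p H; rewrite S_pt /monoU.
rewrite (sum_collapse n); first by rewrite dl_id mulr1.
by move=> m hm; rewrite dlC (dl_neq _ _ hm) mulr0.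
Qed.

Lemma mulU_cartr_f (x : U R) f : mulU h x (cartU f) = fun p H => x p H * f (shift H (wt R p)).
Proof. apply: funU => p H; exact: mulU_cartr_pt. Qed.

Lemma mulU_monoUr_pt (x : U R) m p H :
  mulU h x (monoU m) p H = \sum_(k <- monos) x k H * tab h k m p H.
Proof.
rewrite /mulU; apply: eq_bigr => k _; rewrite /monoU.
rewrite (sum_collapse m); first by rewrite dl_id mulr1.
by move=> n hn; rewrite dlC (dl_neq _ _ hn) mulr0 mul0r.
Qed.

Definition UD : U R := addU (elU (fun H => gg H + c * gg H * Cc h H / (q h * kk H)) M1)
                            (elU (fun H => - (c * gg H / (q h * kk H))) Mpm).
Definition SUD : U R := addU (elU gg M1) (elU (fun H => - (c * gg H * kk H / q h)) Mpm).

Lemma uDrE : uDr h = UD.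
Proof.
apply: funU => p H.
rewrite /uDr /SbaMap !sum_monos !SmonoU !mulU_cartr_f !mulU_monoUr_pt !sum_monos.
rewrite /Smono SMSPE SPE SME /oneU monoUE RmatE /RM /UD /add2 /el2 /addU /elU.
case: p; cbn [tab dl]; atoms.
all: fld.
Qed.

Lemma SUDE : S h UD = SUD.
Proof.
apply: funU => p H; rewrite S_pt sum_monos /Smono SMSPE SPE SME /oneU monoUE.
rewrite /UD /SUD /addU /elU.
case: p; cbn [tab dl]; atoms.
all: fld.
Qed.

Lemma nu2 : mulU h (nu h) (nu h) = mulU h (uDr h) (S h (uDr h)).
Proof.
rewrite uDrE SUDE nuE; apply: funU => p H.
rewrite /NU /UD /SUD !mulU_addl !mulU_addr !mulU_elU.
case: p; cbn [tab dl]; atoms.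
all: fld.
Qed.

End Atoms.
End Infra.

Theorem mainTheorem3 (R : realType) (h : R[i]) (hq : q h ^+ 2 != 1) :
  (forall x : U R, mulU h (nu h) x = mulU h x (nu h)) /\
  mulU h (nu h) (nuinv h) = @oneU R /\ mulU h (nuinv h) (nu h) = @oneU R /\
  mulU h (nu h) (nu h) = mulU h (uDr h) (S h (uDr h)) /\
  (exists w : U2 R,
      mul2 h w (mul2 h (R21 h) (Rmat h)) = @one2 R /\
      mul2 h (mul2 h (R21 h) (Rmat h)) w = @one2 R /\
      Delta h (nu h) = mul2 h w (tens (nu h) (nu h))) /\
  eps (nu h) = 1 /\ S h (nu h) = nu h.
Proof.
split; first by apply: nu_central.
split; first by apply: nu_nuinv.
split; first by apply: nuinv_nu.
split; first by apply: nu2.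
split.
  exists (Wc R h); split; first by apply: W_RR.
  split; first by apply: RR_W.
  by apply: Delta_nu.
split; first by apply: eps_nu.
by apply: S_nu.
Qed.
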